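(* Let $\mathscr{X}$ be a totally bounded normed metric space with $\|x\|\le1$ for all $x$, consider the $\epsilon$-perturbation channel on $\mathscr{X}$ described in the context, let $0<\epsilon\le1$ and $0\le\delta<m_{\mathscr{Y}}(V_\epsilon)$. Then $$C^\delta_\epsilon=\sup\Big\{ I_{\tilde\delta/|[\![X]\!]|}(Y;X)\ :\ X \text{ a transmitted UV with } [\![X]\!]\subseteq\mathscr{X},\ 0\le\tilde\delta\le \delta/m_{\mathscr{Y}}([\![Y]\!])\Big\}\ \text{bits},$$ where $Y$ is the received UV corresponding to $X$.
   Context: Uncertain variables (UVs): a UV is a map $U$ from a sample space $\Omega$ to a set; jointly considered UVs share $\Omega$. $[\![U]\!]=\{U(\omega)\}$; $[\![U|w]\!]=\{U(\omega):W(\omega)=w\}$, $[\![U|W]\!]=\{[\![U|w]\!]:w\in[\![W]\!]\}$. An uncertainty function on a set $\mathscr{U}$ is a map $m$ on subsets of $\mathscr{U}$ with $m(\emptyset)=0$, $0<m(S)<\infty$ for nonempty $S$, $\max\{m(S_1),m(S_2)\}\le m(S_1\cup S_2)$. $\delta$-mutual information: for UVs $U$ (values in $\mathscr{U}$ with uncertainty function $m_{\mathscr{U}}$) and $W$, points $u,u'\in[\![U]\!]$ are $\delta$-connected via $[\![U|W]\!]$ if there are $w_1,\dots,w_N\in[\![W]\!]$ with $u\in[\![U|w_1]\!]$, $u'\in[\![U|w_N]\!]$, $m_{\mathscr{U}}([\![U|w_i]\!]\cap[\![U|w_{i-1}]\!])/m_{\mathscr{U}}([\![U]\!])>\delta$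 for $1<i\le N$; a set is $\delta$-connected if all pairs of its points are. A $\delta$-overlap family $[\![U|W]\!]^*_\delta$ is a family of distinct subsets covering $[\![U]\!]$, of largest cardinality among covering families such that (i) each member is $\delta$-connected and contains some $[\![U|w]\!]$; (ii) distinct members $S_1,S_2$ satisfy $m_{\mathscr{U}}(S_1\cap S_2)\le\delta\, m_{\mathscr{U}}([\![U]\!])$; (iii) each $[\![U|w]\!]$ lies in some member. $I_\delta(U;W)=\log_2|[\![U|W]\!]^*_\delta|$ if such a family exists, else $0$. Channel: the output space is $\mathscr{Y}=\mathscr{X}$; $m_{\mathscr{X}},m_{\mathscr{Y}}$ are uncertainty functions on $\mathscr{X},\mathscr{Y}$ with $m_{\mathscr{Y}}(\mathscr{Y})=1$. $S_\epsilon(x)=\{y\in\mathscr{Y}:\|x-y\|\le\epsilon\}$; $V_\epsilon=S_\epsilon(x^* )$ where $x^*$ minimizes $m_{\mathscr{Y}}(S_\epsilon(x))$ over $x\in\mathscr{X}$. A codebook is a discrete set $\mathcal{C}\subseteq\mathscr{X}$. $e_\epsilon(x_1,x_2)=m_{\mathscr{Y}}(S_\epsilon(x_1)\cap S_\epsilon(x_2))/m_{\mathscr{Y}}(\mathscr{Y})$. $\mathcal{C}$ is $(\epsilon,\delta)$-distinguishable if $e_\epsilon(x_1,x_2)\le\delta/|\mathcal{C}|$ for all distinct $x_1,x_2\in\mathcal{C}$; $C^\delta_\epsilon=\sup\log_2|\mathcal{C}|$ over $(\epsilon,\delta)$-distinguishable codebooks. For a codebook $\mathcal{C}$, the transmitted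 UV $X$ and received UV $Y$ satisfy $[\![X]\!]=\mathcal{C}$, $[\![Y]\!]=\bigcup_{x\in\mathcal{C}}S_\epsilon(x)$, $[\![Y|x]\!]=\{y\in[\![Y]\!]:\|x-y\|\le\epsilon\}$, $[\![X|y]\!]=\{x\in[\![X]\!]:\|x-y\|\le\epsilon\}$. *)

(* Defs.v *)
From HB Require Import structures.
From mathcomp Require Import all_boot all_order all_algebra.
From mathcomp Require Import all_classical all_reals all_analysis.
From mathcomp Require Import finmap.
Set Implicit Arguments. Unset Strict Implicit. Unset Printing Implicit Defensive.
Import Order.TTheory GRing.Theory Num.Theory.
Import numFieldNormedType.Exports.
Local Open Scope classical_set_scope.
Local Open Scope ring_scope.

Section Defs.
Variables (R : realType) (V : normedModType R).

Definition log2 (x : R) : R := ln x / ln 2.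

Definition totally_bounded_set (A : set V) : Prop :=
  forall e : R, 0 < e -> exists s : seq V,
    (forall x, x \in s -> A x) /\ A `<=` \bigcup_(x in [set x | x \in s]) ball x e.

Definition uncertainty_fn (D : set V) (m : set V -> R) : Prop :=
  [/\ m set0 = 0,
      (forall S, S `<=` D -> S !=set0 -> 0 < m S) &
      (forall S1 S2, S1 `<=` D -> S2 `<=` D ->
         Num.max (m S1) (m S2) <= m (S1 `|` S2))].

(** S_eps(x) = { y in Y : ||x - y|| <= eps } (with Y = X as sets) *)
Definition Sball (XX : set V) (eps : R) (x : V) : set V :=
  [set y | XX y /\ `|x - y| <= eps].

(** ** delta-mutual information I_delta(U;W), given
    UU = [[U]], WW = [[W]], cond w = [[U|w]], m = m_U *)
Section DeltaMI.
Variable W : Type.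
Variables (m : set V -> R) (UU : set V) (WW : set W) (cond : W -> set V).

Definition dconnected (d : R) (u u' : V) : Prop :=
  exists (N : nat) (w : nat -> W),
    [/\ (0 < N)%N, (forall i, (i < N)%N -> WW (w i)),
        cond (w 0%N) u, cond (w N.-1) u' &
        forall i, (0 < i < N)%N ->
          m (cond (w i) `&` cond (w i.-1)) / m UU > d].

Definition dconnected_set (d : R) (S : set V) : Prop :=
  forall u u', S u -> S u' -> dconnected d u u'.

Definition overlap_admissible (d : R) (F : set (set V)) : Prop :=
  [/\ (forall S, F S -> S `<=` UU),
      \bigcup_(S in F) S = UU,
      (forall S, F S -> dconnected_set d S /\ exists2 w, WW w & cond w `<=` S),
      (forall S1 S2, F S1 -> F S2 -> S1 <> S2 -> m (S1 `&` S2) <= d * m UU) &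
      (forall w, WW w -> exists2 S, F S & cond w `<=` S)].

Definition overlap_family (d : R) (F : set (set V)) : Prop :=
  [/\ overlap_admissible d F, finite_set F &
      forall G, overlap_admissible d G ->
        finite_set G /\ (#|` fset_set G| <= #|` fset_set F|)%fset%N].

Definition deltaMI (d : R) : R :=
  if `[< exists F, overlap_family d F >] then
    log2 (xget 0%N [set n | exists F, overlap_family d F /\ (#|` fset_set F|)%fset = n])%:R
  else 0.
End DeltaMI.

Definition received_range (XX : set V) (eps : R) (C : {fset V}) : set V :=
  \bigcup_(x in [set x | x \in C]) Sball XX eps x.

Definition Ygiven (XX : set V) (eps : R) (C : {fset V}) (x : V) : set V :=
  [set y | received_range XX eps C y /\ `|x - y| <= eps].

Definition codebook (XX : set V) (C : {fset V}) : Prop :=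
  C != fset0 /\ forall x, x \in C -> XX x.

Definition distinguishable (XX : set V) (mY : set V -> R) (eps delta : R)
    (C : {fset V}) : Prop :=
  forall x1 x2, x1 \in C -> x2 \in C -> x1 != x2 ->
    mY (Sball XX eps x1 `&` Sball XX eps x2) / mY XX <= delta / (#|` C|)%fset%:R.

Definition capacity (XX : set V) (mY : set V -> R) (eps delta : R) : \bar R :=
  ereal_sup [set (log2 (#|` C|)%fset%:R)%:E | C in
     [set C | codebook XX C /\ distinguishable XX mY eps delta C]].

(** I_dt(Y;X) for the transmitted UV with [[X]] = C *)
Definition channel_MI (XX : set V) (mY : set V -> R) (eps dt : R)
    (C : {fset V}) : R :=
  deltaMI mY (received_range XX eps C) [set x | x \in C]
    (Ygiven XX eps C) dt.

End Defs.

(* Main.v *)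
Require Import Defs.
From HB Require Import structures.
From mathcomp Require Import all_boot all_order all_algebra.
From mathcomp Require Import all_classical all_reals all_analysis.
From mathcomp Require Import finmap.
From mathcomp Require Import lra.
Import Order.TTheory GRing.Theory Num.Theory.
Import numFieldNormedType.Exports.
Local Open Scope classical_set_scope.
Local Open Scope ring_scope.

Section Aux.
Variables (R : realType) (V : normedModType R) (XX : set V)
    (mY : set V -> R) (eps delta : R) (xstar : V).
Hypotheses (unc : uncertainty_fn XX mY) (mXX1 : mY XX = 1) (Xxs : XX xstar)
  (hmin : forall x, XX x -> mY (Sball XX eps xstar) <= mY (Sball XX eps x))
  (eps0 : 0 < eps) (d0 : 0 <= delta) (dlt : delta < mY (Sball XX eps xstar)).

Lemma umono A B : A `<=` B -> B `<=` XX -> mY A <= mY B.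
Proof.
move=> AB BX; case: unc => _ _ /(_ A B (subset_trans AB BX) BX).
by rewrite (setUidr AB) ge_max => /andP[].
Qed.

Lemma rng_sub C : received_range XX eps C `<=` XX.
Proof. by move=> y [x _ []]. Qed.

Lemma Yg_eq C x : x \in C -> Ygiven XX eps C x = Sball XX eps x.
Proof.
move=> xC; apply/seteqP; split => y.
  by move=> [[x0 _ [Xy _]] h]; split.
move=> [Xy h]; split=> //; exists x => //; by split.
Qed.

Lemma rng_pos C : codebook XX C -> 0 < mY (received_range XX eps C).
Proof.
move=> [/fset0Pn [x xC] CX]; case: unc => _ h _; apply: h; first exact: rng_sub.
exists x; exists x => //; split; first exact: CX.
by rewrite subrr normr0 ltW.
Qed.

Lemma inj_family C d G :
  codebook XX C -> d * mY (received_range XX eps C) <= delta / (#|` C|)%fset%:R ->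
  overlap_admissible mY (received_range XX eps C) [set x | x \in C]
     (Ygiven XX eps C) d G ->
  finite_set G /\ exists C' : {fset V}, [/\ (C' `<=` C)%fset,
     #|` C'|%fset = #|` fset_set G|%fset & distinguishable XX mY eps delta C'].
Proof.
move=> [C0 CX] hd [GU Gcov Gconn Gdisj Gw].
have Cpos : (0 < #|` C|)%N by rewrite cardfs_gt0.
have n1 : 1 <= (#|` C|)%fset%:R :> R by rewrite ler1n.
have hdC : delta / (#|` C|)%fset%:R <= delta.
  rewrite ler_pdivrMr; last by apply: lt_le_trans n1.
  by rewrite -{1}(mulr1 delta); exact: ler_wpM2l.
have key : forall w S1 S2, w \in C -> G S1 -> G S2 ->
    Ygiven XX eps C w `<=` S1 -> Ygiven XX eps C w `<=` S2 -> S1 = S2.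
  move=> w S1 S2 wC G1 G2 h1 h2; apply: contrapT => neq.
  have := Gdisj _ _ G1 G2 neq.
  have : mY (Sball XX eps xstar) <= mY (S1 `&` S2).
    apply: le_trans (hmin w (CX w wC)) _; rewrite -(Yg_eq _ _ wC).
    apply: umono; first by move=> y h; split; [exact: h1 | exact: h2].
    by move=> y [a _]; exact: rng_sub (GU _ G1 _ a).
  move=> h3 h4; have := le_trans h3 (le_trans h4 (le_trans hd hdC)).
  by rewrite leNgt dlt.
have : forall S, exists w, G S -> w \in C /\ Ygiven XX eps C w `<=` S.
  move=> S; have [GS|nGS] := pselect (G S); last by exists xstar.
  have [_ [w wC h]] := Gconn _ GS; by exists w.
case/choice => f hf.
have finj : forall S1 S2, G S1 -> G S2 -> f S1 = f S2 -> S1 = S2.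
  move=> S1 S2 G1 G2 e; have [w1C h1] := hf _ G1; have [_ h2] := hf _ G2.
  rewrite -e in h2; exact: key w1C G1 G2 h1 h2.
have : forall x, exists S, (exists2 S', G S' & f S' = x) -> G S /\ f S = x.
  move=> x; case: (pselect (exists2 S', G S' & f S' = x)) => [[S' h1 h2]|nh].
    by exists S'.
  by exists set0.
case/choice => g hg.
have finG : finite_set G.
  apply: (sub_finite_set _ (finite_image g (finite_fset C))).
  move=> S GS; exists (f S); first by have [] := hf _ GS.
  have [Gg e] := hg (f S) (ex_intro2 _ _ S GS erefl).
  exact: finj Gg GS e.
split=> //.
have sub : ((f @` fset_set G)%fset `<=` C)%fset.
  apply/fsubsetP => x /imfsetP [S /= + ->]; rewrite in_fset_set // => /set_mem GS.
  by have [] := hf _ GS.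
exists (f @` fset_set G)%fset; split => //.
  apply/eqP/card_in_imfsetP => S1 S2; rewrite !in_fset_set // => /set_mem G1 /set_mem G2; exact: finj.
move=> x1 x2 x1in; move: (x1in) => /imfsetP[S1 /= + ->].
move=> + /imfsetP[S2 /= + ->]; rewrite !in_fset_set // => /set_mem G1 /set_mem G2 ne.
have ne12 : S1 <> S2 by move=> e; rewrite e eqxx in ne.
have [c1 h1] := hf _ G1; have [c2 h2] := hf _ G2.
rewrite mXX1 divr1 -(Yg_eq _ _ c1) -(Yg_eq _ _ c2).
apply: (le_trans (@umono _ (S1 `&` S2) _ _)).
- by move=> y [a b]; split; [exact: h1|exact: h2].
- by move=> y [a _]; exact: rng_sub (GU _ G1 _ a).
apply: le_trans (Gdisj _ _ G1 G2 ne12) _; apply: le_trans hd _.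
apply: ler_wpM2l => //.
have C'pos : (0 < #|` (f @` fset_set G)%fset|)%N.
  rewrite cardfs_gt0; apply/fset0Pn; exists (f S1).
  by apply/imfsetP; exists S1 => //; rewrite in_fset_set //; exact: mem_set.
have le1 := fsubset_leq_card sub.
have p1 : (#|` (f @` fset_set G)%fset|%:R : R) \in Num.pos by rewrite posrE ltr0n.
have p2 : (#|` C|%:R : R) \in Num.pos by rewrite posrE ltr0n (leq_trans C'pos).
by rewrite (lef_pV2 p2 p1) ler_nat.
Qed.


Lemma log2_le (a b : R) : 0 < a -> a <= b -> log2 a <= log2 b.
Proof.
rewrite /log2 => a0 ab; apply: ler_wpM2r.
  by rewrite invr_ge0 ln_ge0 // ler1n.
by rewrite ler_ln // posrE //; apply: lt_le_trans ab.
Qed.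

Lemma cap_ge0 : (0%:E <= capacity XX mY eps delta)%E.
Proof.
apply: le_ereal_sup_tmp; exists (log2 (1 : R))%:E; last by rewrite /log2 ln1 mul0r.
exists [fset xstar]%fset; last by rewrite cardfs1.
split; first split.
- by apply/fset0Pn; exists xstar; rewrite in_fset1.
- by move=> x; rewrite in_fset1 => /eqP ->.
- by move=> x1 x2; rewrite !in_fset1 => /eqP-> /eqP->; rewrite eqxx.
Qed.

Lemma divn_le (n : nat) : (0 < n)%N -> delta / n%:R <= delta.
Proof.
move=> n0; have n1 : 1 <= n%:R :> R by rewrite ler1n.
rewrite ler_pdivrMr; last by apply: lt_le_trans n1.
by rewrite -{1}(mulr1 delta); exact: ler_wpM2l.
Qed.

Lemma main :
  capacity XX mY eps delta =
  ereal_sup [set (channel_MI XX mY eps (p.2 / (#|` p.1|)%fset%:R) p.1)%:E | p in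
     [set p : {fset V} * R | codebook XX p.1 /\
        0 <= p.2 /\ p.2 <= delta / mY (received_range XX eps p.1)]].
Proof.
apply: le_anti; apply/andP; split.
- apply: ge_ereal_sup => _ [C [cb dist] <-].
  set m := mY (received_range XX eps C).
  have m0 : 0 < m := rng_pos _ cb.
  have mn0 : m != 0 by rewrite gt_eqF.
  have [C0 CX] := cb.
  have Cpos : (0 < #|` C|)%N by rewrite cardfs_gt0.
  apply: le_ereal_sup_tmp.
  exists (channel_MI XX mY eps ((delta / m) / #|` C|%:R) C)%:E.
    exists (C, delta / m) => //; split => //; split => //.
    by rewrite divr_ge0 // ltW.
  rewrite lee_fin /channel_MI /deltaMI.
  pose F0 := Ygiven XX eps C @` [set x | x \in C].
  have hd : delta / m / #|` C|%:R * m = delta / #|` C|%:R.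
    by rewrite mulrAC divfK.
  have adm : overlap_admissible mY (received_range XX eps C) [set x | x \in C]
     (Ygiven XX eps C) (delta / m / #|` C|%:R) F0.
    split.
    + by move=> S [x xC <-] y [Ry _].
    + apply/seteqP; split => y.
        by move=> [S [x xC <-] [Ry _]].
      move=> Ry; have [x xC [Xy hxy]] := Ry.
      exists (Ygiven XX eps C x); first by exists x.
      by split.
    + move=> S [x xC <-]; split; last by exists x.
      move=> u u' hu hu'; exists 1%N, (fun=> x); split => //.
      by move=> i /andP[a b]; move: a b; case: i => [|[]].
    + move=> S1 S2 [x1 c1 <-] [x2 c2 <-] ne.
      have nex : x1 != x2 by apply/eqP => e; apply: ne; rewrite e.
      rewrite (Yg_eq _ _ c1) (Yg_eq _ _ c2) hd.
      by have := dist x1 x2 c1 c2 nex; rewrite mXX1 divr1.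
    + by move=> w wC; exists (Ygiven XX eps C w) => //; exists w.
  have cardF0 : #|` fset_set F0|%fset = #|` C|%fset.
    rewrite fset_set_image ?finite_fset // set_fsetK.
    apply/eqP/card_in_imfsetP => x1 x2 c1 c2 e.
    apply/eqP; apply: contraT => nex.
    have := dist x1 x2 c1 c2 nex.
    rewrite -(Yg_eq _ _ c1) -(Yg_eq _ _ c2) -e setIid mXX1 divr1 (Yg_eq _ _ c1).
    move=> h; have := le_trans (hmin _ (CX _ c1)) (le_trans h (divn_le _ Cpos)).
    by rewrite leNgt dlt.
  have ofF0 : overlap_family mY (received_range XX eps C) [set x | x \in C]
     (Ygiven XX eps C) (delta / m / #|` C|%:R) F0.
    split => //; first by apply: finite_image; exact: finite_fset.
    move=> G admG.
    have eq_le_hd : delta / m / #|` C|%:R * m <= delta / #|` C|%:R by rewrite hd.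
    have [finG [C' [sub cd _]]] := inj_family _ _ _ cb eq_le_hd admG.
    by split => //; rewrite cardF0 -cd; exact: fsubset_leq_card.
  have exn : exists n, [set n | exists F, overlap_family mY (received_range XX eps C)
      [set x | x \in C] (Ygiven XX eps C) (delta / m / #|` C|%:R) F /\
      #|` fset_set F|%fset = n] n.
    by exists #|` fset_set F0|%fset, F0.
  rewrite asboolT; last by exists F0.
  case: (xgetPex 0%N exn) => G [[_ _ maxG] <-].
  apply: log2_le; first by rewrite ltr0n.
  by rewrite -cardF0 ler_nat; have [] := maxG _ (let: And3 a _ _ := ofF0 in a).
- apply: ge_ereal_sup => _ [[C dt] /= [cb [dt0 dtle]] <-].
  rewrite /channel_MI /deltaMI.
  case: asboolP => [[F ofF]|_]; last exact: cap_ge0.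
  set m := mY (received_range XX eps C).
  have m0 : 0 < m := rng_pos _ cb.
  have exn : exists n, [set n | exists F, overlap_family mY (received_range XX eps C)
      [set x | x \in C] (Ygiven XX eps C) (dt / #|` C|%:R) F /\
      #|` fset_set F|%fset = n] n.
    by exists #|` fset_set F|%fset, F.
  case: (xgetPex 0%N exn) => G [[admG _ _] <-].
  have hd : dt / #|` C|%:R * m <= delta / #|` C|%:R.
    rewrite mulrAC; apply: ler_wpM2r; first by rewrite invr_ge0.
    by rewrite -ler_pdivlMr.
  have [_ [C' [sub cd dist']]] := inj_family _ _ _ cb hd admG.
  rewrite -cd; case: (posnP #|` C'|%fset) => [c0|cpos].
    by rewrite c0 /log2 ln0 ?mul0r //; exact: cap_ge0.
  apply: ereal_sup_ubound; exists C' => //; split => //; split.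
    by rewrite -cardfs_gt0.
  by move=> x /(fsubsetP sub); case: cb => _; apply.
Qed.

End Aux.

Theorem theorem5 (R : realType) (V : normedModType R) (XX : set V)
    (mY : set V -> R) (eps delta : R) (xstar : V) :
  totally_bounded_set XX ->
  (forall x, XX x -> `|x| <= 1) ->
  uncertainty_fn XX mY -> mY XX = 1 ->
  XX xstar -> (forall x, XX x -> mY (Sball XX eps xstar) <= mY (Sball XX eps x)) ->
  0 < eps -> eps <= 1 ->
  0 <= delta -> delta < mY (Sball XX eps xstar) ->
  capacity XX mY eps delta =
  ereal_sup [set (channel_MI XX mY eps (p.2 / (#|` p.1|)%fset%:R) p.1)%:E | p in
     [set p : {fset V} * R | codebook XX p.1 /\
        0 <= p.2 /\ p.2 <= delta / mY (received_range XX eps p.1)]].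
Proof.
move=> _ _ unc mXX1 Xxs hmin eps0 _ d0 dlt.
exact: (main _ _ _ _ _ _ _ unc mXX1 Xxs hmin eps0 d0 dlt).
Qed.
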